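(* Let $\square$ be a finite cube, $\mathbf a$ a configuration and $F\subset E_d(\square)$ such that every edge of $F$ has both endpoints in $\mathscr C_{bc}^{\mathbf a^F}(\square)$. Let $u$ follow the canonical grain extension rule relative to $\mathbf a$ on $\square$. Then for every $G\subset F$ and every $x\in\square\setminus\mathscr C_{bc}^{\mathbf a^F}(\square)$, $u^G(x)=u^G([x])$; consequently $(D_Fu)(x)=(D_Fu)([x])$ for every such $x$.
   Context: Bond configurations $\mathbf a\in\{0,1\}^{E_d}$ on $\mathbb Z^d$, with $\ell^\infty$ distance $\mathrm{dist}$. For a cube $\square$: $E_d(\square)$ its nearest-neighbour edges, $\partial\square=\{x\in\square:\exists y\sim x,y\notin\square\}$. For a configuration $\mathbf b$, $\mathscr C_{bc}^{\mathbf b}(\square)=\{x\in\square: x$ is joined to $\partial\square$ by a $\mathbf b$-open path inside $\square\}$ (boundary-connecting clusters; it contains $\partial\square$), and for $x\in\square$, $\mathcal O^{\mathbf b}(x)$ is the set of vertices joined to $x$ by a $\mathbf b$-open path inside $\square$. $\mathbf a^G(e)=\mathbf 1_{e\in G}+\mathbf a(e)\mathbf 1_{e\notin G}$. Canonical grain relative to base $\mathbf a$: for $G\subset E_d(\square)$, $[x]^G=x$ if $x\in\mathscr C_{bc}^{\mathbf a^G}(\square)$, and otherwise $[x]^G=\arg\min_{y\in\mathscr C_{bc}^{\mathbf a}(\square)}\mathrm{dist}(y,\mathcal O^{\mathbf a^G}(x))$ with ties broken by a fixed lexicographic order; $[x]=[x]^\emptyset$. A function $u$ of the configuration and of $x\in\square$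 follows the canonical grain extension rule (relative to $\mathbf a$) if $u(\mathbf a^G,x)=u(\mathbf a^G,[x]^G)$ for all $G\subset E_d(\square)$, $x\in\square$. Write $u^G(x)=u(\mathbf a^G,x)$ and $(D_Fu)(x)=\sum_{G\subset F}(-1)^{|F\setminus G|}u^G(x)$. *)

(* Defs.v *)
From HB Require Import structures.
From mathcomp Require Import all_boot all_order all_algebra.
From mathcomp Require Import finmap.
Set Implicit Arguments. Unset Strict Implicit. Unset Printing Implicit Defensive.
Import Order.TTheory GRing.Theory Num.Theory.
Local Open Scope fset_scope.

Definition pt (d : nat) := {ffun 'I_d -> int}.

Definition shiftp d (x : pt d) (i : 'I_d) : pt d :=
  [ffun j => (x j + ((j == i) : nat)%:Z)%R].
Definition unshiftp d (x : pt d) (i : 'I_d) : pt d :=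
  [ffun j => (x j - ((j == i) : nat)%:Z)%R].

(* Nearest-neighbour edges of Z^d: the pair (x, i) stands for the edge
   {x, x + e_i}; every edge has exactly one such representation. *)
Definition edge d := (pt d * 'I_d)%type.

Definition config d := edge d -> bool.

Definition cfg_with d (a : config d) (G : {fset edge d}) : config d :=
  fun e => (e \in G) || a e.

Definition dist d (x y : pt d) : nat := \max_(i < d) absz (x i - y i)%R.

Definition lex_lt d (x y : pt d) : Prop :=
  exists i : 'I_d, (forall j : 'I_d, (j < i)%N -> x j = y j) /\ (x i < y i)%R.
Definition lex_le d (x y : pt d) : Prop := x = y \/ lex_lt x y.

Definition incube d (c : pt d) (n : nat) (x : pt d) : bool :=
  [forall i, (c i <= x i)%R && (x i < c i + n%:Z)%R].

Definition cube_edge d (c : pt d) n (e : edge d) : bool :=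
  incube c n e.1 && incube c n (shiftp e.1 e.2).

Definition cube_bdry d (c : pt d) n (x : pt d) : bool :=
  incube c n x &&
  [exists i, ~~ incube c n (shiftp x i) || ~~ incube c n (unshiftp x i)].

Definition adj_in d (c : pt d) n (b : config d) (x y : pt d) : bool :=
  [&& incube c n x, incube c n y &
   [exists i, ((y == shiftp x i) && b (x, i)) || ((x == shiftp y i) && b (y, i))]].

Definition opath d (c : pt d) n (b : config d) (x y : pt d) : Prop :=
  incube c n x /\ exists p : seq (pt d), path (adj_in c n b) x p /\ last x p = y.

Definition Cbc d (c : pt d) n (b : config d) (x : pt d) : Prop :=
  incube c n x /\ exists y, cube_bdry c n y /\ opath c n b x y.

(* dist(y, O^b(x)) <= dist(y', O^b(x)) (the minimum over the finite,
   nonempty set O^b(x) written out). *)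
Definition dist_O_le d (c : pt d) n (b : config d) (x y y' : pt d) : Prop :=
  forall z', opath c n b x z' -> exists z, opath c n b x z /\ (dist y z <= dist y' z')%N.

Definition is_minimiser d (c : pt d) n (a b : config d) (x y : pt d) : Prop :=
  Cbc c n a y /\ forall y', Cbc c n a y' -> dist_O_le c n b x y y'.

(* Canonical grain relative to base a:  grain c n a G x y  <->  y = [x]^G. *)
Definition grain d (c : pt d) n (a : config d) (G : {fset edge d}) (x y : pt d) : Prop :=
  (Cbc c n (cfg_with a G) x /\ y = x) \/
  (~ Cbc c n (cfg_with a G) x /\
   is_minimiser c n a (cfg_with a G) x y /\
   forall y', is_minimiser c n a (cfg_with a G) x y' -> lex_le y y').

Definition grain_rule d (R : Type) (c : pt d) n (a : config d)
  (u : config d -> pt d -> R) : Prop :=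
  forall (G : {fset edge d}), (forall e, e \in G -> cube_edge c n e) ->
  forall x, incube c n x -> forall y, grain c n a G x y ->
  u (cfg_with a G) x = u (cfg_with a G) y.

Definition DF d (R : zmodType) (a : config d) (F : {fset edge d})
  (u : config d -> pt d -> R) (x : pt d) : R :=
  (\sum_(G <- fpowerset F) (u (cfg_with a G) x) *~ ((-1) ^+ #|` F `\` G|))%R.

(* Main.v *)
Require Import Defs.
From HB Require Import structures.
From mathcomp Require Import all_boot all_order all_algebra.
From mathcomp Require Import finmap.
Local Open Scope fset_scope.
Set Implicit Arguments. Unset Strict Implicit.

Lemma adj_mono d (c : pt d) n (b1 b2 : config d) :
  (forall e, b1 e -> b2 e) -> forall x y, adj_in c n b1 x y -> adj_in c n b2 x y.
Proof.
move=> H x y /and3P [h1 h2 /existsP [i hi]].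
apply/and3P; split=> //; apply/existsP; exists i.
case/orP: hi => /andP [h3 h4]; apply/orP; [left|right]; rewrite h3 /=; exact: H.
Qed.

Lemma opath_mono d (c : pt d) n (b1 b2 : config d) :
  (forall e, b1 e -> b2 e) -> forall x y, opath c n b1 x y -> opath c n b2 x y.
Proof.
move=> H x y [hx [p [hp hl]]]; split=> //; exists p; split=> //.
exact: (sub_path (adj_mono H)).
Qed.

Lemma opath_trans d (c : pt d) n (b : config d) x w y :
  opath c n b x w -> opath c n b w y -> opath c n b x y.
Proof.
move=> [hx [p [hp hl]]] [hw [q [hq hq']]]; split=> //; exists (p ++ q).
by rewrite cat_path last_cat hl hp hq.
Qed.

Lemma Cbc_back d (c : pt d) n (b : config d) x w :
  opath c n b x w -> Cbc c n b w -> Cbc c n b x.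
Proof.
move=> hxw [hw [y [hy hwy]]]; split; first by case: hxw.
exists y; split=> //; exact: opath_trans hwy.
Qed.

Lemma cfg_sub d (a : config d) (G F : {fset edge d}) :
  G `<=` F -> forall e, cfg_with a G e -> cfg_with a F e.
Proof.
move=> /fsubsetP H e; rewrite /cfg_with => /orP [/H -> //|->]; by rewrite orbT.
Qed.

Lemma key_path d (c : pt d) n (a : config d) (F G : {fset edge d}) x :
  (forall e, e \in F ->
     Cbc c n (cfg_with a F) e.1 /\ Cbc c n (cfg_with a F) (shiftp e.1 e.2)) ->
  ~ Cbc c n (cfg_with a F) x -> G `<=` F ->
  forall p w, opath c n (cfg_with a F) x w ->
  path (adj_in c n (cfg_with a G)) w p -> path (adj_in c n (cfg_with a fset0)) w p.
Proof.
move=> HF Hx HG; elim=> [//|y p IH] w hw /= /andP [hwy hp].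
have hadj : adj_in c n (cfg_with a fset0) w y.
  move: hwy => /and3P [h1 h2 /existsP [i hi]].
  apply/and3P; split=> //; apply/existsP; exists i.
  case/orP: hi => /andP [/eqP h3 h4]; apply/orP; [left|right];
    rewrite h3 eqxx /=; move: h4; rewrite /cfg_with in_fset0 /=;
    case/orP=> [/(fsubsetP HG) hinF|//]; exfalso; apply: Hx.
  - by apply: (Cbc_back hw); case: (HF _ hinF).
  - by apply: (Cbc_back hw); rewrite h3; case: (HF _ hinF).
rewrite hadj /=; apply: IH hp.
apply: (opath_trans hw); split; first by case/and3P: hadj.
exists [:: y]; split=> //=; rewrite andbT.
apply: (adj_mono _ hadj) => e; exact: cfg_sub (fsub0set _) e.
Qed.

Lemma key d (c : pt d) n (a : config d) (F G : {fset edge d}) x :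
  (forall e, e \in F ->
     Cbc c n (cfg_with a F) e.1 /\ Cbc c n (cfg_with a F) (shiftp e.1 e.2)) ->
  ~ Cbc c n (cfg_with a F) x -> G `<=` F ->
  forall z, opath c n (cfg_with a G) x z <-> opath c n (cfg_with a fset0) x z.
Proof.
move=> HF Hx HG z; split; last first.
  apply: opath_mono => e; exact: cfg_sub (fsub0set _) e.
move=> [hx [p [hp hl]]]; split=> //; exists p; split=> //.
apply: (key_path HF Hx HG) hp; split=> //; by exists [::].
Qed.

Lemma min_equiv d (c : pt d) n (a b1 b2 : config d) x :
  (forall z, opath c n b1 x z <-> opath c n b2 x z) ->
  forall y, is_minimiser c n a b1 x y <-> is_minimiser c n a b2 x y.
Proof.
move=> H y; rewrite /is_minimiser /dist_O_le.
split=> [[h1 h2]|[h1 h2]]; split=> // y' hy' z' /H hz';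
  have [z [hz hd]] := h2 y' hy' z' hz'; exists z; split=> //; exact/H.
Qed.

Theorem lemma6p1 (d : nat) (c : pt d) (n : nat) (a : config d)
  (F : {fset edge d}) (R : zmodType) (u : config d -> pt d -> R) :
  (forall e, e \in F -> cube_edge c n e) ->
  (forall e, e \in F ->
     Cbc c n (cfg_with a F) e.1 /\ Cbc c n (cfg_with a F) (shiftp e.1 e.2)) ->
  grain_rule c n a u ->
  forall x, incube c n x -> ~ Cbc c n (cfg_with a F) x ->
  forall bx, grain c n a fset0 x bx ->
    (forall G : {fset edge d}, G `<=` F ->
       u (cfg_with a G) x = u (cfg_with a G) bx) /\
    DF a F u x = DF a F u bx.
Proof.
move=> HFc HF Hu x hx Hx bx Hg.
have P : forall G : {fset edge d}, G `<=` F ->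
       u (cfg_with a G) x = u (cfg_with a G) bx.
  move=> G HG; apply: Hu => //.
    by move=> e /(fsubsetP HG) /HFc.
  have K := key HF Hx HG.
  have nG : ~ Cbc c n (cfg_with a G) x.
    move=> [_ [y [hy hxy]]]; apply: Hx; split=> //; exists y; split=> //.
    exact: opath_mono (cfg_sub HG) _ _ hxy.
  case: Hg => [[[_ [y [hy hxy]]] _]|[_ [hm hlex]]].
    exfalso; apply: nG; split=> //; exists y; split=> //; exact/K.
  right; split=> //; split; first exact/(min_equiv _ K).
  by move=> y' /(min_equiv _ K) /hlex.
split=> //; rewrite /DF; apply: eq_big_seq => G; rewrite fpowersetE => HG.
by rewrite P.
Qed.
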